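(* Let $D$ be an integrally closed domain with quotient field $K$, let $\overline{K}$ be an algebraic closure of $K$, $\overline{D}$ the integral closure of $D$ in $\overline{K}$, and $G_K=\mathrm{Gal}(\overline{K}/K)$. Let $\Omega\subseteq\overline{D}$ be $G_K$-invariant, and let $F\subseteq\overline{K}$ be an algebraic extension of $K$ containing $\Omega$. Then $\textnormal{Int}_F(\Omega,\overline{D})$ is the integral closure of $\textnormal{Int}_K(\Omega,\overline{D})$ in $F(X)$.
   Context: For a field $L$ with $K\subseteq L\subseteq\overline{K}$, $\textnormal{Int}_L(\Omega,\overline{D})=\{f\in L[X]\mid f(a)\in\overline{D}\ \forall a\in\Omega\}$. For $\Omega\subseteq\overline{K}$, $G_K(\Omega)=\{\sigma(a)\mid\sigma\in G_K,a\in\Omega\}$, and $\Omega$ is $G_K$-invariant if $G_K(\Omega)=\Omega$. *)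

(* Defs.v *)
From HB Require Import structures.
From mathcomp Require Import all_boot all_order all_algebra fraction.
Set Implicit Arguments. Unset Strict Implicit. Unset Printing Implicit Defensive.
Import GRing.Theory Num.Theory.
Local Open Scope ring_scope.

Notation tofracp := (@FracField.tofrac _).


Definition integral_over (R : comNzRingType) (S : R -> Prop) (x : R) : Prop :=
  exists p : {poly R}, p \is monic /\ (forall i, S p`_i) /\ root p x.

Definition poly_over (R : nzRingType) (S : R -> Prop) (p : {poly R}) : Prop :=
  forall i, S p`_i.

Definition is_subring (R : nzRingType) (S : R -> Prop) : Prop :=
  S 1 /\ (forall x y, S x -> S y -> S (x - y)) /\ (forall x y, S x -> S y -> S (x * y)).

Definition is_subfield (L : fieldType) (S : L -> Prop) : Prop :=
  is_subring S /\ (forall x, S x -> S x^-1).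

Definition is_quotient_field (L : fieldType) (D K : L -> Prop) : Prop :=
  (forall x, D x -> K x) /\
  (forall k, K k -> exists a b, D a /\ D b /\ b != 0 /\ k = a / b).

Definition integrally_closed_in (L : fieldType) (D K : L -> Prop) : Prop :=
  forall x, K x -> integral_over D x -> D x.

Definition algebraic_over (L : fieldType) (K : L -> Prop) : Prop :=
  forall x : L, exists p : {poly L}, p != 0 /\ poly_over K p /\ root p x.

Definition in_GK (L : fieldType) (K : L -> Prop) (sigma : {rmorphism L -> L}) : Prop :=
  bijective sigma /\ (forall x, K x -> sigma x = x).

Definition GK_invariant (L : fieldType) (K Omega : L -> Prop) : Prop :=
  forall x, (exists (sigma : {rmorphism L -> L}) a,
                in_GK K sigma /\ Omega a /\ x = sigma a) <-> Omega x.

Definition IntF (L : fieldType) (F Omega Dbar : L -> Prop) (f : {poly L}) : Prop :=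
  poly_over F f /\ (forall a, Omega a -> Dbar f.[a]).

Definition in_ratfun_field (L : fieldType) (F : L -> Prop) (phi : {fraction {poly L}}) : Prop :=
  exists p q : {poly L}, poly_over F p /\ poly_over F q /\ q != 0 /\ phi = tofracp p / tofracp q.

(* Main.v *)
Require Import Defs.
From HB Require Import structures.
From mathcomp Require Import all_boot all_order all_algebra fraction.
From mathcomp Require Import boolp zify classical_sets.
Set Implicit Arguments. Unset Strict Implicit. Unset Printing Implicit Defensive.
Set Default Proof Using "All".
Import GRing.Theory Num.Theory.
Local Open Scope ring_scope.

Definition sp (R : nzRingType) (S : R -> Prop) (H : is_subring S) : pred R :=
  fun x => `[< S x >].

Lemma subring0 (R : nzRingType) (S : R -> Prop) : is_subring S -> S 0.
Proof. by case=> S1 [Ssub _]; rewrite -(subrr 1); apply: Ssub. Qed.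

Lemma sp_closed (R : nzRingType) (S : R -> Prop) (H : is_subring S) :
  subring_closed (sp H).
Proof.
case: (H) => S1 [Ssub Smul]; split; rewrite /sp.
- exact/asboolP.
- by move=> x y /asboolP Sx /asboolP Sy; apply/asboolP; apply: Ssub.
- by move=> x y /asboolP Sx /asboolP Sy; apply/asboolP; apply: Smul.
Qed.

HB.instance Definition _ (R : nzRingType) (S : R -> Prop) (H : is_subring S) :=
  GRing.isSubringClosed.Build R (sp H) (sp_closed H).

Lemma spP (R : nzRingType) (S : R -> Prop) (H : is_subring S) x : (x \in sp H) <-> S x.
Proof. by rewrite unfold_in /sp; split => /asboolP. Qed.

Section SubT.
Variables (L : fieldType) (S : L -> Prop) (H : is_subring S).
Record subT : Type := SubT { sval_ :> L; _ : sval_ \in sp H }.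
HB.instance Definition _ := [isSub for sval_].
HB.instance Definition _ := [Choice of subT by <:].
HB.instance Definition _ := [SubChoice_isSubComNzRing of subT by <:].
Definition svalr : {rmorphism subT -> L} := val.
End SubT.


Section IntBridge.
Variables (L : fieldType) (D : L -> Prop) (H : is_subring D).

Lemma intP x : integral_over D x <-> integralOver (svalr H) x.
Proof.
split.
- move=> [p [mp [Dp rp]]].
  pose p' := \poly_(i < size p) (insubd (0 : subT H) p`_i).
  have ep : map_poly (svalr H) p' = p.
    apply/polyP => i; rewrite coef_map coef_poly.
    case: ltnP => hi; last by rewrite nth_default // insubdN //; apply/spP; apply: subring0.
    by rewrite /= insubdK //; apply/spP.
  exists p'.
    apply/monicP; apply: val_inj.
    have := lead_coef_map_inj (f := svalr H) (@val_inj _ _ _) (rmorph0 _) p'.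
    rewrite ep (monicP mp) /= => ->; by [].
  by rewrite ep.
- move=> [p' mp' rp']; exists (map_poly (svalr H) p'); split.
    exact: monic_map.
  split=> // i; rewrite coef_map /=; apply/spP; exact: valP.
Qed.

Lemma int_sub x y : integral_over D x -> integral_over D y -> integral_over D (x - y).
Proof. by move=> /intP hx /intP hy; apply/intP; apply: integral_sub. Qed.
Lemma int_add x y : integral_over D x -> integral_over D y -> integral_over D (x + y).
Proof. by move=> /intP hx /intP hy; apply/intP; apply: integral_add. Qed.
Lemma int_mul x y : integral_over D x -> integral_over D y -> integral_over D (x * y).
Proof. by move=> /intP hx /intP hy; apply/intP; apply: integral_mul. Qed.
Lemma int_D x : D x -> integral_over D x.
Proof.
move=> Dx; apply/intP.
have -> : x = svalr H (insubd (0 : subT H) x) by rewrite /= insubdK //; apply/spP.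
exact: integral_id.
Qed.
Lemma int_subring : is_subring (integral_over D).
Proof.
split; first by apply: int_D; case: H.
by split => x y; [apply: int_sub | apply: int_mul].
Qed.
Lemma int_root_monic (p : {poly L}) u : p \is monic -> root p u ->
  (forall i, integral_over D p`_i) -> integral_over D u.
Proof.
move=> mp rp ip; apply/intP; apply: integral_root_monic mp rp _.
move=> z /(nthP 0) [i _ <-]; apply/intP; exact: ip.
Qed.
End IntBridge.

Section Graph.
Variables (L : fieldType) (K : L -> Prop).
Hypothesis Kf : is_subfield K.

Lemma K0 : K 0. Proof. by case: Kf => /subring0. Qed.
Lemma K1 : K 1. Proof. by case: Kf => -[]. Qed.
Lemma KB x y : K x -> K y -> K (x - y). Proof. by case: Kf => -[_ [h _]] _; apply: h. Qed.
Lemma KM x y : K x -> K y -> K (x * y). Proof. by case: Kf => -[_ [_ h]] _; apply: h. Qed.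
Lemma KV x : K x -> K x^-1. Proof. by case: Kf => _; apply. Qed.
Lemma KN x : K x -> K (- x). Proof. by move=> kx; rewrite -sub0r; apply: KB => //; apply: K0. Qed.
Lemma KD x y : K x -> K y -> K (x + y).
Proof. by move=> kx ky; rewrite -[y]opprK; apply: KB => //; apply: KN. Qed.

Definition RG (G : (L * L)%type -> Prop) :=
  [/\ (forall a b c, G (a,b) -> G (a,c) -> b = c),
      (forall k, K k -> G (k,k)),
      (forall a b a' b', G (a,b) -> G (a',b') -> G (a - a', b - b')) &
      (forall a b a' b', G (a,b) -> G (a',b') -> G (a * a', b * b'))].

Definition Rel (G : (L * L)%type -> Prop) (p q : {poly L}) := forall i, G (p`_i, q`_i).
Definition dom (G : (L * L)%type -> Prop) a := exists b, G (a, b).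

Section RGprops.
Variable G : (L * L)%type -> Prop.
Hypothesis HG : RG G.

Lemma RG_fun a b c : G (a,b) -> G (a,c) -> b = c. Proof. by case: HG => h _ _ _; apply: h. Qed.
Lemma RG_K k : K k -> G (k,k). Proof. by case: HG => _ h _ _; apply: h. Qed.
Lemma RG_B a b a' b' : G (a,b) -> G (a',b') -> G (a - a', b - b').
Proof. by case: HG => _ _ h _; apply: h. Qed.
Lemma RG_M a b a' b' : G (a,b) -> G (a',b') -> G (a * a', b * b').
Proof. by case: HG => _ _ _ h; apply: h. Qed.
Lemma RG_0 : G (0,0). Proof. by apply: RG_K; apply: K0. Qed.
Lemma RG_1 : G (1,1). Proof. by apply: RG_K; apply: K1. Qed.
Lemma RG_N a b : G (a,b) -> G (-a,-b).
Proof. by move=> h; rewrite -[-a]sub0r -[-b]sub0r; apply: RG_B => //; apply: RG_0. Qed.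
Lemma RG_D a b a' b' : G (a,b) -> G (a',b') -> G (a + a', b + b').
Proof. by move=> h h'; rewrite -(opprK a') -(opprK b'); apply: RG_B => //; apply: RG_N. Qed.
Lemma RG_X a b n : G (a,b) -> G (a ^+ n, b ^+ n).
Proof. move=> h; elim: n => [|n IH]; first by rewrite !expr0; apply: RG_1.
by rewrite !exprS; apply: RG_M. Qed.

Lemma RG_sum I (r : seq I) (P : pred I) (F1 F2 : I -> L) :
  (forall i, P i -> G (F1 i, F2 i)) -> G (\sum_(i <- r | P i) F1 i, \sum_(i <- r | P i) F2 i).
Proof.
move=> h; apply: (big_ind2 (fun x y => G (x,y))) => //; first exact: RG_0.
by move=> *; apply: RG_D.
Qed.

Lemma Rel_D p q p' q' : Rel G p q -> Rel G p' q' -> Rel G (p + p') (q + q').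
Proof. by move=> h h' i; rewrite !coefD; apply: RG_D. Qed.
Lemma Rel_B p q p' q' : Rel G p q -> Rel G p' q' -> Rel G (p - p') (q - q').
Proof. by move=> h h' i; rewrite !coefB; apply: RG_B. Qed.
Lemma Rel_M p q p' q' : Rel G p q -> Rel G p' q' -> Rel G (p * p') (q * q').
Proof. by move=> h h' i; rewrite !coefM; apply: RG_sum => j _; apply: RG_M. Qed.
Lemma Rel_C a b : G (a,b) -> Rel G a%:P b%:P.
Proof. by move=> h i; rewrite !coefC; case: (i == 0)%N => //; apply: RG_0. Qed.
Lemma Rel_X : Rel G 'X 'X.
Proof. by move=> i; rewrite !coefX; case: (i == 1)%N; [apply: RG_1 | apply: RG_0]. Qed.
Lemma Rel_Xn n : Rel G 'X^n 'X^n.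
Proof. by move=> i; rewrite !coefXn; case: (i == n)%N; [apply: RG_1 | apply: RG_0]. Qed.
Lemma Rel_K p : poly_over K p -> Rel G p p.
Proof. by move=> h i; apply: RG_K. Qed.
Lemma Rel_fun p q q' : Rel G p q -> Rel G p q' -> q = q'.
Proof. by move=> h h'; apply/polyP => i; apply: RG_fun (h i) (h' i). Qed.
Lemma Rel_horner p q x y : Rel G p q -> G (x,y) -> G (p.[x], q.[y]).
Proof.
move=> h hxy; pose n := maxn (size p) (size q).
rewrite (@horner_coef_wide _ n) ?leq_maxl // (@horner_coef_wide _ n q) ?leq_maxr //.
by apply: RG_sum => i _; apply: RG_M => //; apply: RG_X.
Qed.
Lemma Rel_ex (p : {poly L}) : (forall i, dom G p`_i) -> exists q, Rel G p q.
Proof.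
elim/poly_ind: p => [|p c IH] h.
  by exists 0 => i; rewrite coef0; apply: RG_0.
have [q hq] : exists q, Rel G p q.
  by apply: IH => i; have := h i.+1; rewrite coefD coefMX coefC /= addr0.
have [d hd] : dom G c by have := h 0%N; rewrite coefD coefMX coefC /= add0r.
exists (q * 'X + d%:P); apply: Rel_D; last exact: Rel_C.
by apply: Rel_M => //; apply: Rel_X.
Qed.
End RGprops.

End Graph.

Definition tailp (L : nzRingType) (h : {poly L}) := \poly_(i < (size h).-1) h`_i.+1.

Lemma tailpE (L : nzRingType) (h : {poly L}) : h = tailp h * 'X + (h`_0)%:P.
Proof.
apply/polyP => i; rewrite coefD coefMX coefC; case: i => [|i] /=; first by rewrite add0r.
rewrite addr0 coef_poly; case: ltnP => // hi.
by rewrite nth_default //; move: hi; case: (size h).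
Qed.

Lemma size_tailp (L : nzRingType) (h : {poly L}) : h != 0 -> (size (tailp h) < size h)%N.
Proof.
move=> hn; apply: leq_ltn_trans (size_poly _ _) _.
by move: hn; rewrite -size_poly_eq0; case: (size h).
Qed.

Lemma ex_min (P : nat -> Prop) : (exists n, P n) -> exists n, P n /\ forall k, P k -> (n <= k)%N.
Proof.
move=> [n Pn].
have hP : exists n, `[< P n >] by exists n; apply/asboolP.
case: (ex_minnP hP) => m /asboolP Pm hm; exists m; split=> // k Pk.
by apply: hm; apply/asboolP.
Qed.

Section Ext.
Variables (L : closedFieldType) (K : L -> Prop).
Hypothesis Kf : is_subfield K.
Hypothesis alg : algebraic_over K.

Lemma poly_over_tailp p : poly_over K p -> poly_over K (tailp p).
Proof. by move=> h i; rewrite coef_poly; case: ltnP => _; [apply: h | apply: K0]. Qed.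

Lemma monic_mk (p : {poly L}) : p != 0 -> (lead_coef p)^-1 *: p \is monic.
Proof. by move=> pn; apply/monicP; rewrite lead_coefZ mulVf // lead_coef_eq0. Qed.

Section RGinv.
Variable G : (L * L)%type -> Prop.
Hypothesis HG : RG K G.

Lemma RG_inv a b : G (a,b) -> G (a^-1, b^-1).
Proof.
move=> hab; have [a0|anz] := eqVneq a 0.
  rewrite a0 in hab *.
  by have <- := RG_fun Kf HG (RG_0 Kf HG) hab; rewrite invr0; apply: (RG_0 Kf HG).
have [h [hn [hK hr]]] := alg a.
elim: {h} (size h) {-2}h (leqnn (size h)) hn hK hr => [|n IH] h hs hn hK hr.
  by move: hn; rewrite -size_poly_eq0; move: hs; case: (size h).
have [h0|h0] := eqVneq h`_0 0.
  have e := tailpE h; rewrite h0 addr0 in e.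
  apply: (IH (tailp h)).
  - by rewrite -ltnS; apply: leq_trans (size_tailp hn) hs.
  - by apply: contraNneq hn => t0; rewrite e t0 mul0r.
  - exact: poly_over_tailp.
  - by move: hr; rewrite /root {1}e hornerMX mulf_eq0 (negbTE anz) orbF.
set u := tailp h; set c := h`_0.
have e := tailpE h; rewrite -/u -/c in e.
have hua : u.[a] * a + c = 0 by move: hr; rewrite /root {1}e !hornerE => /eqP.
have hb : h.[b] = 0.
  have := Rel_horner Kf HG (Rel_K Kf HG hK) hab; rewrite (rootP hr) => h0b.
  by apply: (RG_fun Kf HG h0b); apply: (RG_0 Kf HG).
have hub : u.[b] * b + c = 0 by move: hb; rewrite {1}e !hornerE.
have uK := poly_over_tailp hK; rewrite -/u in uK.
have hG := RG_M Kf HG (RG_N Kf HG (Rel_horner Kf HG (Rel_K Kf HG uK) hab)) (RG_K Kf HG (KV Kf (hK 0%N))).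
rewrite -/c in hG.
have ea : a^-1 = - u.[a] * c^-1.
  have ec : c = - (u.[a] * a) by apply/eqP; rewrite -addr_eq0 addrC hua.
  have una : u.[a] != 0 by apply: contraNneq h0 => e0; rewrite -/c ec e0 mul0r oppr0.
  by rewrite ec invrN mulrNN invfM mulrA mulfV // mul1r.
have eb : b^-1 = - u.[b] * c^-1.
  have ec : c = - (u.[b] * b) by apply/eqP; rewrite -addr_eq0 addrC hub.
  have unb : u.[b] != 0 by apply: contraNneq h0 => e0; rewrite -/c ec e0 mul0r oppr0.
  have bnz : b != 0 by apply: contraNneq h0 => e0; rewrite -/c ec e0 mulr0 oppr0.
  by rewrite ec invrN mulrNN invfM mulrA mulfV // mul1r.
by rewrite ea eb.
Qed.
End RGinv.

Section ExtStep.
Variable G : (L * L)%type -> Prop.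
Hypothesis HG : RG K G.
Variables (x y : L) (m m' : {poly L}).
Hypotheses (mm : m \is monic) (mdom : forall i, dom G m`_i) (mx : root m x)
  (mmin : forall p : {poly L}, p \is monic -> (forall i, dom G p`_i) -> root p x -> (size m <= size p)%N)
  (Rm : Rel G m m') (my : root m' y).

Lemma Rel00 : Rel G 0 0.
Proof. by move=> i; rewrite coef0; apply: (RG_0 Kf HG). Qed.

Lemma core (p q : {poly L}) : Rel G p q -> root p x -> root q y.
Proof.
elim: {p} (size p) {-2}p (leqnn (size p)) q => [|n IH] p hs q hR hr.
  have p0 : p = 0 by apply/eqP; rewrite -size_poly_eq0 -leqn0.
  rewrite p0 in hR; have <- := Rel_fun Kf HG Rel00 hR; exact: root0.
have [p0|pn] := eqVneq p 0.
  rewrite p0 in hR; have <- := Rel_fun Kf HG Rel00 hR; exact: root0.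
set s := size p; have s1 : (0 < s)%N by rewrite lt0n size_poly_eq0.
set c := lead_coef p; set d := q`_(s.-1).
have hcd : G (c, d) by rewrite /c lead_coefE; apply: hR.
have cn : c != 0 by rewrite lead_coef_eq0.
have mn : m != 0 := monic_neq0 mm.
set sm := size m; have sm1 : (0 < sm)%N by rewrite lt0n size_poly_eq0.
case: (ltnP s sm) => hsm.
  have H : (sm <= size ((lead_coef p)^-1 *: p))%N.
    apply: mmin; first exact: monic_mk pn.
    2: by rewrite rootZ // invr_neq0.
    move=> i; exists (d^-1 * q`_i); rewrite coefZ.
    by apply: (RG_M Kf HG) => //; apply: (RG_inv HG).
  by rewrite size_scale ?invr_neq0 // -/s leqNgt hsm in H.
set k := (s - sm)%N.
set p' := p - c%:P * ('X^k * m); set q' := q - d%:P * ('X^k * m').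
have hR' : Rel G p' q'.
  apply: (Rel_B Kf HG) => //; apply: (Rel_M Kf HG); first exact: (Rel_C Kf HG hcd).
  by apply: (Rel_M Kf HG) => //; apply: (Rel_Xn Kf HG).
have hr' : root p' x.
  by rewrite /root /p' hornerD hornerN !hornerM hornerC hornerXn (rootP hr) (rootP mx) !mulr0 oppr0 addr0.
have hs' : (size p' <= n)%N.
  apply: leq_trans (_ : s.-1 <= n)%N; last by rewrite -ltnS prednK.
  apply/leq_sizeP => j hj.
  have kj : (k <= j)%N by rewrite /k; lia.
  rewrite coefB coefCM coefXnM ltnNge kj /=.
  have [ej|nej] := eqVneq j s.-1.
    have -> : (j - k)%N = sm.-1 by rewrite ej /k; lia.
    rewrite -lead_coefE (monicP mm) mulr1 ej /c lead_coefE subrr //.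
  have hj' : (s <= j)%N by move/eqP: nej; lia.
  have e1 : p`_j = 0 by apply: nth_default.
  have e2 : m`_(j - k) = 0 by apply: nth_default; rewrite /k -/sm; lia.
  by rewrite e1 e2 mulr0 subrr.
have := IH p' hs' q' hR' hr'.
rewrite /root /q' hornerD hornerN !hornerM hornerC hornerXn (rootP my) !mulr0 oppr0 addr0.
by [].
Qed.

Definition Gext : (L * L)%type -> Prop :=
  fun pr => exists p q, Rel G p q /\ pr.1 = p.[x] /\ pr.2 = q.[y].

Lemma RG_Gext : RG K Gext.
Proof.
split.
- move=> a b c [p [q [hR [/= -> ->]]]] [p2 [q2 [hR2 [/= e ->]]]].
  have h := core (Rel_B Kf HG hR hR2).
  apply/eqP; rewrite -subr_eq0; move: h; rewrite /root !hornerD !hornerN e subrr eqxx.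
  by apply.
- move=> k kK; exists k%:P, k%:P; split; first by apply: (Rel_C Kf HG); apply: (RG_K Kf HG).
  by rewrite !hornerC.
- move=> a b a' b' [p [q [hR [/= -> ->]]]] [p2 [q2 [hR2 [/= -> ->]]]].
  exists (p - p2), (q - q2); split; first exact: (Rel_B Kf HG).
  by rewrite !hornerD !hornerN.
- move=> a b a' b' [p [q [hR [/= -> ->]]]] [p2 [q2 [hR2 [/= -> ->]]]].
  exists (p * p2), (q * q2); split; first exact: (Rel_M Kf HG).
  by rewrite !hornerM.
Qed.

Lemma Gext_sub pr : G pr -> Gext pr.
Proof.
case: pr => a b h; exists a%:P, b%:P; split; first exact: (Rel_C Kf HG).
by rewrite !hornerC.
Qed.

Lemma Gext_xy : Gext (x, y).
Proof. exists 'X, 'X; split; first exact: (Rel_X Kf HG). by rewrite !hornerX. Qed.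
End ExtStep.

Lemma minpoly_ex (M : L -> Prop) x : (forall k, K k -> M k) ->
  exists m : {poly L}, [/\ m \is monic, (forall i, M m`_i), root m x &
    forall p : {poly L}, p \is monic -> (forall i, M p`_i) -> root p x -> (size m <= size p)%N].
Proof.
move=> hKM.
have [h [hn [hK hr]]] := alg x.
have := @ex_min (fun n => exists p : {poly L}, [/\ p \is monic, (forall i, M p`_i), root p x & size p = n]) _.
case.
  exists (size ((lead_coef h)^-1 *: h)), ((lead_coef h)^-1 *: h); split => //.
  - exact: monic_mk.
  - move=> i; apply: hKM; rewrite coefZ; apply: (KM Kf) => //.
    by apply: (KV Kf); rewrite lead_coefE; apply: hK.
  - by rewrite rootZ // invr_neq0 // lead_coef_eq0.
move=> n [[m [mm mM mr ms]] hmin]; exists m; split => // p pm pM pr.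
by rewrite ms; apply: hmin; exists p.
Qed.
End Ext.

Definition mkR (L : fieldType) (f : L -> L) (Ha : zmod_morphism f) (Hm : monoid_morphism f) : L -> L := f.
HB.instance Definition _ (L : fieldType) (f : L -> L) (Ha : zmod_morphism f) (Hm : monoid_morphism f) :=
  GRing.isZmodMorphism.Build L L (mkR Ha Hm) Ha.
HB.instance Definition _ (L : fieldType) (f : L -> L) (Ha : zmod_morphism f) (Hm : monoid_morphism f) :=
  GRing.isMonoidMorphism.Build L L (mkR Ha Hm) Hm.

Section Zorn.
Variables (L : closedFieldType) (K : L -> Prop).
Hypothesis Kf : is_subfield K.
Hypothesis alg : algebraic_over K.

Lemma RG_ext (G1 G2 : (L * L)%type -> Prop) : RG K G1 -> (forall pr, G1 pr <-> G2 pr) -> RG K G2.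
Proof.
move=> h e; have -> : G2 = G1 by apply: funext => pr; apply: propext; split => /e.
exact: h.
Qed.

Lemma Rel_monic G (HG : RG K G) (m m' : {poly L}) : Rel G m m' -> m \is monic ->
  m' \is monic /\ size m' = size m.
Proof.
move=> hR mm; have mn := monic_neq0 mm.
have s1 : (0 < size m)%N by rewrite lt0n size_poly_eq0.
have hz : forall j, (size m <= j)%N -> m'`_j = 0.
  move=> j hj; have := hR j; rewrite nth_default // => h.
  by apply: esym; apply: (RG_fun Kf HG (RG_0 Kf HG) h).
have hl : m'`_(size m).-1 = 1.
  have := hR (size m).-1; rewrite -lead_coefE (monicP mm) => h.
  by apply: esym; apply: (RG_fun Kf HG (RG_1 Kf HG) h).
have sz : size m' = size m.
  apply/eqP; rewrite eqn_leq; apply/andP; split; first by apply/leq_sizeP.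
  rewrite -(prednK s1) ltnNge; apply/negP => h.
  by move: hl; rewrite nth_default // => /esym/eqP; rewrite oner_eq0.
split => //; apply/monicP; by rewrite lead_coefE sz.
Qed.

Variable G0 : (L * L)%type -> Prop.
Hypothesis HG0 : RG K G0.

Definition PZ (A : set (L * L)%type) := RG K (fun pr => A pr \/ G0 pr).

Lemma PZ_chain (F : set (set (L * L)%type)) : subset F PZ -> total_on F subset ->
  PZ (bigcup F (fun X => X)).
Proof.
move=> FP tot; set U := bigcup F (fun X => X).
have two : forall pr1 pr2, U pr1 \/ G0 pr1 -> U pr2 \/ G0 pr2 ->
  exists Y, [/\ RG K Y, (forall pr, Y pr -> U pr \/ G0 pr), Y pr1 & Y pr2].
  move=> pr1 pr2 [[X1 FX1 h1]|h1] [[X2 FX2 h2]|h2].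
  - have [s12|s21] := tot _ _ FX1 FX2.
      exists (fun pr => X2 pr \/ G0 pr); split; [exact: FP|  | by left; apply: s12 | by left].
      by move=> pr [h|h]; [left; exists X2 | right].
    exists (fun pr => X1 pr \/ G0 pr); split; [exact: FP|  | by left | by left; apply: s21].
    by move=> pr [h|h]; [left; exists X1 | right].
  - exists (fun pr => X1 pr \/ G0 pr); split; [exact: FP|  | by left | by right].
    by move=> pr [h|h]; [left; exists X1 | right].
  - exists (fun pr => X2 pr \/ G0 pr); split; [exact: FP|  | by right | by left].
    by move=> pr [h|h]; [left; exists X2 | right].
  - by exists G0; split => // pr h; right.
split.
- move=> a b c h1 h2; have [Y [HY _ y1 y2]] := two _ _ h1 h2.
  exact: (RG_fun Kf HY y1 y2).
- by move=> k kK; right; apply: (RG_K Kf HG0).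
- move=> a b a' b' h1 h2; have [Y [HY sY y1 y2]] := two _ _ h1 h2.
  by apply: sY; apply: (RG_B Kf HY).
- move=> a b a' b' h1 h2; have [Y [HY sY y1 y2]] := two _ _ h1 h2.
  by apply: sY; apply: (RG_M Kf HY).
Qed.

Lemma maximal_total : exists G : (L * L)%type -> Prop,
  [/\ RG K G, (forall pr, G0 pr -> G pr) & forall x, dom G x].
Proof.
have [A [PA Amax]] := Zorn_bigcup PZ_chain.
set G := fun pr => A pr \/ G0 pr.
exists G; split => //; first by move=> pr h; right.
move=> x; apply: contrapT => ndx.
have KG : forall k, K k -> dom G k by move=> k kK; exists k; apply: (RG_K Kf PA).
have [m [mm mdom mx mmin]] := minpoly_ex Kf alg x KG.
have [m' Rm] := Rel_ex Kf PA mdom.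
have [mm' sm'] := Rel_monic PA Rm mm.
have [y my] : exists y, root m' y.
  apply/closed_rootP; rewrite sm'; apply/eqP => s1.
  have e : m = 1.
    apply/polyP => i; rewrite coefC; case: i => [|i] /=.
      by have := monicP mm; rewrite lead_coefE s1.
    by rewrite nth_default // s1.
  by move: mx; rewrite e (negbTE (root1 _)).
set G' := Gext G x y.
have HG' : RG K G' := RG_Gext Kf alg PA mm mdom mx mmin Rm my.
have Gs := Gext_sub Kf alg PA mm mdom mx mmin Rm my.
have Gxy := Gext_xy Kf alg PA mm mdom mx mmin Rm my.
apply: (Amax (fun pr => A pr \/ G' pr)).
  split; first by move=> pr h; left.
  move=> sub; have : (fun pr => A pr \/ G' pr) (x, y) by right; apply: Gxy.
  by move/sub => h; apply: ndx; exists y; left.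
apply: (RG_ext HG') => pr; split.
  by move=> h; left; right.
move=> [[h|h]|h] //.
- by apply: Gs; left.
- by apply: Gs; right.
Qed.

Lemma aut_ext : exists sigma : {rmorphism L -> L},
  in_GK K sigma /\ forall a b, G0 (a, b) -> sigma a = b.
Proof.
have [G [HG sG dG]] := maximal_total.
pose f := fun x => projT1 (cid (dG x)).
have hf : forall x, G (x, f x) := fun x => projT2 (cid (dG x)).
have fE : forall a b, G (a, b) -> f a = b by move=> a b h; apply: (RG_fun Kf HG (hf a) h).
have Ha : zmod_morphism f by move=> a b; apply: fE; apply: (RG_B Kf HG).
have Hm : monoid_morphism f.
  split; first by apply: fE; apply: (RG_1 Kf HG).
  by move=> a b; apply: fE; apply: (RG_M Kf HG).
pose sigma : {rmorphism L -> L} := mkR Ha Hm.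
have sE : forall x, sigma x = f x by [].
have fixK : forall k, K k -> sigma k = k by move=> k kK; rewrite sE; apply: fE; apply: (RG_K Kf HG).
have sinj : injective sigma := fmorph_inj sigma.
have ssurj : forall z, exists w, sigma w = z.
  move=> z; have [h [hn [hK hr]]] := alg z.
  have [rs hrs] := closed_field_poly_normal h.
  have rootE : forall w, root h w = (w \in rs).
    move=> w; rewrite {1}hrs rootZ ?lead_coef_eq0 //; exact: root_prod_XsubC.
  have hmap : forall w, root h w -> root h (sigma w).
    move=> w hw; have e : map_poly sigma h = h.
      by apply/polyP => i; rewrite coef_map /=; apply: fixK.
    by rewrite /root -{1}e horner_map (rootP hw) rmorph0.
  set s := undup rs.
  have us : uniq (map sigma s) by rewrite (map_inj_uniq sinj) undup_uniq.
  have sub : {subset map sigma s <= s}.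
    move=> w /mapP [v]; rewrite !mem_undup -!rootE => hv ->; exact: hmap.
  have sz : (size s <= size (map sigma s))%N by rewrite size_map.
  have [_ eqs] := uniq_min_size us sub sz.
  have : z \in s by rewrite mem_undup -rootE.
  by rewrite -eqs => /mapP [w _ ->]; exists w.
exists sigma; split; last by move=> a b h; rewrite sE; apply: fE; apply: sG.
split => //.
pose g := fun z => projT1 (cid (ssurj z)).
have hg : forall z, sigma (g z) = z := fun z => projT2 (cid (ssurj z)).
by exists g => [x|z] //; apply: sinj; rewrite hg.
Qed.
End Zorn.

Section Conj.
Variables (L : closedFieldType) (K : L -> Prop).
Hypothesis Kf : is_subfield K.
Hypothesis alg : algebraic_over K.

Definition DK : (L * L)%type -> Prop := fun pr => K pr.1 /\ pr.2 = pr.1.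

Lemma RG_DK : RG K DK.
Proof.
split.
- by move=> a b c [_ /= ->] [_ /= ->].
- by move=> k kK; split.
- by move=> a b a' b' [/= ha ->] [/= ha' ->]; split => //=; apply: (KB Kf).
- by move=> a b a' b' [/= ha ->] [/= ha' ->]; split => //=; apply: (KM Kf).
Qed.

Lemma conj_aut (z z' : L) (m : {poly L}) : m \is monic -> poly_over K m -> root m z ->
  (forall p : {poly L}, p \is monic -> poly_over K p -> root p z -> (size m <= size p)%N) ->
  root m z' -> exists sigma : {rmorphism L -> L}, in_GK K sigma /\ sigma z = z'.
Proof.
move=> mm mK mz mmin mz'.
have domK : forall a, dom DK a <-> K a.
  by move=> a; split; [move=> [b []] | move=> ka; exists a].
have mdom : forall i, dom DK m`_i by move=> i; apply/domK.
have mmin' : forall p : {poly L}, p \is monic -> (forall i, dom DK p`_i) -> root p z -> (size m <= size p)%N.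
  by move=> p pm pd pz; apply: mmin => // i; apply/domK.
have Rm : Rel DK m m by apply: (Rel_K Kf RG_DK).
have HG := RG_Gext Kf alg RG_DK mm mdom mz mmin' Rm mz'.
have [sigma [hs hG]] := aut_ext Kf alg HG.
exists sigma; split => //; apply: hG; exact: (Gext_xy Kf alg RG_DK mm mdom mz mmin' Rm mz').
Qed.

Lemma GK_inv (sigma : {rmorphism L -> L}) : in_GK K sigma ->
  exists tau : {rmorphism L -> L}, in_GK K tau /\ forall x, tau (sigma x) = x /\ sigma (tau x) = x.
Proof.
move=> [[g gK Kg] fixK].
have sinj : injective sigma := fmorph_inj sigma.
have Ha : zmod_morphism g by move=> a b; apply: sinj; rewrite rmorphB !Kg.
have Hm : monoid_morphism g.
  split; first by apply: sinj; rewrite rmorph1 Kg.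
  by move=> a b; apply: sinj; rewrite rmorphM !Kg.
exists (mkR Ha Hm); split; last by move=> x; split; [apply: gK | apply: Kg].
split; first by exists sigma => x; [apply: Kg | apply: gK].
by move=> k kK; apply: sinj; rewrite /= Kg fixK.
Qed.
End Conj.

Lemma pnat_gt0' pi n : pi.-nat n -> (0 < n)%N.
Proof. by case/andP. Qed.

Lemma coef_expq (R : comNzRingType) (q : nat) (P : {poly R}) k :
  [pchar R].-nat q -> (P ^+ q)`_k = if (q %| k)%N then (P`_(k %/ q)) ^+ q else 0.
Proof.
move=> hq; have q0 := pnat_gt0' hq.
have hq' : [pchar {poly R}].-nat q by rewrite (eq_pnat _ (@pchar_poly R)).
elim/poly_ind: P k => [|Q c IH] k.
  by rewrite expr0n gtn_eqF // coef0 coef0 expr0n gtn_eqF //; case: ifP.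
have eC : c%:P ^+ q = (c ^+ q)%:P by rewrite rmorphXn.
rewrite exprDn_pchar // exprMn eC coefD coefMXn coefC.
have [k0|kn0] := eqVneq k 0%N.
  rewrite k0 q0 dvdn0 div0n add0r /= coefD coefMX coefC /= add0r //.
case: ltnP => hk.
  rewrite add0r; case: ifP => // hd.
  have k0' : (0 < k)%N by rewrite lt0n.
  by move: (dvdn_leq k0' hd); rewrite leqNgt hk.
rewrite addr0 IH.
have -> : k = ((k - q) + 1 * q)%N by rewrite mul1n subnK.
rewrite divnDMl // mul1n addnK dvdn_addl ?dvdnn // addn1.
by rewrite coefD coefMX coefC /= addr0.
Qed.

Lemma coef_XsubC_pow (L : comNzRingType) (w : L) d :
  (('X - w%:P) ^+ d.+1)`_d = - (d.+1%:R * w).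
Proof.
elim: d => [|d IH].
  by rewrite expr1 coefB coefX coefC /= sub0r mul1r.
rewrite exprSr mulrBr coefB coefMX /= IH coefMC.
have -> : (('X - w%:P) ^+ d.+1)`_d.+1 = 1.
  have := monicP (monic_exp d.+1 (monicXsubC w)).
  by rewrite lead_coefE size_exp_XsubC.
rewrite mul1r -opprD; congr (- _).
by rewrite [in RHS]mulrSr mulrDl mul1r.
Qed.

Section Insep.
Variables (L : closedFieldType) (K : L -> Prop).
Hypothesis Kf : is_subfield K.
Hypothesis alg : algebraic_over K.

Lemma K_nat n : K n%:R.
Proof.
elim: n => [|n IH]; first exact: (K0 Kf).
by rewrite mulrS; apply: (KD Kf) => //; apply: (K1 Kf).
Qed.

Lemma comp_poly_exp (R : comNzRingType) (p r : {poly R}) n : (p ^+ n) \Po r = (p \Po r) ^+ n.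
Proof. by elim: n => [|n IH]; rewrite ?expr0 ?comp_polyC // !exprS comp_polyM IH. Qed.

Lemma pinsep_pow d (w : L) : (0 < d)%N -> poly_over K (('X - w%:P) ^+ d) ->
  exists q, [pchar L].-nat q /\ K (w ^+ q).
Proof.
elim: d {-2}d (leqnn d) w => [|n IH] d hd w d0 hK; first by move: d0; rewrite leqn0 in hd; move/eqP: hd => ->.
have [dn0|dz] := boolP (d%:R != 0 :> L).
  exists 1%N; split; first by [].
  rewrite expr1.
  have h := hK d.-1; rewrite -{1}(prednK d0) coef_XsubC_pow prednK // in h.
  have -> : w = - (- (d%:R * w)) * d%:R^-1 by rewrite opprK mulrC mulKf.
  apply: (KM Kf); first by apply: (KN Kf).
  exact/(KV Kf)/K_nat.
have [p pc] := natf0_pchar d0 (negbNE dz).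
have pp := pcharf_prime pc.
have pd : (p %| d)%N by rewrite (dvdn_pcharf pc); exact: negbNE dz.
have p0 := prime_gt0 pp.
set d' := (d %/ p)%N.
have ed : d = (d' * p)%N by rewrite divnK.
have d'0 : (0 < d')%N by rewrite divn_gt0 // dvdn_leq.
have pcP : p \in [pchar {poly L}] by rewrite pchar_poly.
have e1 : ('X - w%:P) ^+ p = 'X^p - (w ^+ p)%:P.
  rewrite -(pFrobenius_autE pcP) pFrobenius_autB_comm; last exact: mulrC.
  by rewrite !pFrobenius_autE rmorphXn.
have e2 : ('X - w%:P) ^+ d = (('X - (w ^+ p)%:P) ^+ d') \Po 'X^p.
  by rewrite ed mulnC exprM e1 comp_poly_exp comp_polyB comp_polyX comp_polyC.
have hK' : poly_over K (('X - (w ^+ p)%:P) ^+ d').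
  move=> i; have := hK (i * p)%N; rewrite e2 coef_comp_poly_Xn // dvdn_mull // mulnK //.
have hd' : (d' <= n)%N.
  rewrite -ltnS; apply: leq_trans hd; rewrite ed -{1}[d']muln1 ltn_mul2l d'0 /=.
  by rewrite prime_gt1.
have [q [hq hqK]] := IH d' hd' (w ^+ p) d'0 hK'.
exists (p * q)%N; split; first by rewrite pnatM hq andbT pnatE.
by rewrite exprM.
Qed.

Lemma fixed_pinsep (z : L) : (forall sigma : {rmorphism L -> L}, in_GK K sigma -> sigma z = z) ->
  exists q, [pchar L].-nat q /\ K (z ^+ q).
Proof.
move=> hfix.
have [m [mm mK mz mmin]] := minpoly_ex Kf alg z (fun k (h : K k) => h).
have allz : forall w, root m w -> w = z.
  move=> w hw; have [sigma [hs <-]] := conj_aut Kf alg mm mK mz mmin hw.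
  by rewrite hfix.
have [rs hrs] := closed_field_poly_normal m.
rewrite (monicP mm) scale1r in hrs.
have hr : forall r, r \in rs -> r = z.
  move=> r hr; apply: allz; rewrite hrs; by rewrite root_prod_XsubC.
have em : m = ('X - z%:P) ^+ (size rs).
  rewrite hrs; elim: rs hr {hrs} => [|r rs IH] hr; first by rewrite big_nil expr0.
  rewrite big_cons IH; last by move=> r' hr'; apply: hr; rewrite in_cons hr' orbT.
  by rewrite (hr r (mem_head _ _)) exprS.
apply: (pinsep_pow (d := size rs)); last by rewrite -em.
rewrite lt0n size_eq0; apply/eqP => e; move: mz; rewrite em e expr0.
by rewrite (negbTE (root1 _)).
Qed.
End Insep.

Lemma poly_overP (R : nzRingType) (S : R -> Prop) (H : is_subring S) (p : {poly R}) :
  poly_over S p <-> p \is a polyOver (sp H).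
Proof.
split; first by move=> h; apply/polyOverP => i; apply/spP.
by move/polyOverP => h i; apply/spP.
Qed.

Lemma lift_poly (A B : nzRingType) (f : {rmorphism A -> B}) (Q : A -> Prop) (p : {poly B}) :
  Q 0 -> (forall i, exists g, Q g /\ p`_i = f g) ->
  exists P0 : {poly A}, (forall i, Q P0`_i) /\ map_poly f P0 = p.
Proof.
move=> Q0; elim/poly_ind: p => [|p c IH] h.
  by exists 0; split => [i|]; rewrite ?coef0 ?map_poly0.
have [P0 [hQ hP]] : exists P0 : {poly A}, (forall i, Q P0`_i) /\ map_poly f P0 = p.
  apply: IH => i; have [g [hg e]] := h i.+1; exists g; split => //.
  by move: e; rewrite coefD coefMX coefC /= addr0.
have [g [hg e]] := h 0%N; move: e; rewrite coefD coefMX coefC /= add0r => e.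
exists (P0 * 'X + g%:P); split.
  move=> i; rewrite coefD coefMX coefC; case: i => [|i] /=; first by rewrite add0r.
  by rewrite addr0.
by rewrite rmorphD rmorphM /= map_polyX map_polyC hP e.
Qed.

Section Field.
Variables (L : fieldType) (F : L -> Prop).
Hypothesis Ff : is_subfield F.

Lemma div_over (u v f : {poly L}) : poly_over F u -> poly_over F v -> v != 0 -> f * v = u ->
  poly_over F f.
Proof.
have Hs := proj1 Ff.
elim: {f} (size f) {-2}f (leqnn (size f)) u => [|n IH] f hs u hu hv vn e.
  have -> : f = 0 by apply/eqP; rewrite -size_poly_eq0 -leqn0.
  by move=> i; rewrite coef0; apply: (K0 Ff).
have [f0|fn] := eqVneq f 0; first by move=> i; rewrite f0 coef0; apply: (K0 Ff).
set lf := lead_coef f; set k := (size f).-1.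
have hlf : F lf.
  have e' : lead_coef u = lf * lead_coef v by rewrite -e lead_coefM.
  have -> : lf = lead_coef u / lead_coef v by rewrite e' mulfK // lead_coef_eq0.
  by apply: (KM Ff); [rewrite lead_coefE; apply: hu | apply: (KV Ff); rewrite lead_coefE; apply: hv].
set f' := f - lf%:P * 'X^k.
have hf' : poly_over F f'.
  apply: (IH f' _ (u - lf%:P * 'X^k * v)) => //.
  - apply/leq_sizeP => j hj; rewrite coefB coefCM coefXn.
    have [ej|nej] := eqVneq j k.
      by rewrite ej mulr1 /lf lead_coefE subrr.
    rewrite mulr0 subr0 nth_default //.
    by move: hs hj nej; rewrite /k; case: (size f) => [|s] /=; lia.
  - apply/(poly_overP Hs); rewrite rpredB //; first by apply/(poly_overP Hs).
    rewrite rpredM // ?rpredM //; last by apply/(poly_overP Hs).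
      by rewrite polyOverC; apply/spP.
    exact: polyOverXn.
  - by rewrite /f' mulrBl e.
have -> : f = f' + lf%:P * 'X^k by rewrite /f' subrK.
apply/(poly_overP Hs); rewrite rpredD //; first by apply/(poly_overP Hs).
by rewrite rpredM ?polyOverXn // polyOverC; apply/spP.
Qed.
End Field.

Lemma homog (E : fieldType) (p : {poly E}) (a b : E) N : b != 0 -> (size p <= N.+1)%N ->
  p.[a / b] * b ^+ N = \sum_(i < N.+1) p`_i * a ^+ i * b ^+ (N - i).
Proof.
move=> bn sp; rewrite (horner_coef_wide _ sp) mulr_suml; apply: eq_bigr => i _.
have hi : (i <= N)%N by rewrite -ltnS.
have eN : b ^+ N = b ^+ i * b ^+ (N - i) by rewrite -exprD subnKC.
rewrite eN expr_div_n !mulrA mulfVK ?expf_neq0 //.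
Qed.

Section Forward.
Variables (L : fieldType) (D K F Omega : L -> Prop).
Hypotheses (HD : is_subring D) (Kf : is_subfield K) (Ff : is_subfield F).

Lemma forward (phi : {fraction {poly L}}) :
  in_ratfun_field F phi ->
  integral_over (fun psi => exists g, IntF K Omega (integral_over D) g /\ psi = tofracp g) phi ->
  exists f, IntF F Omega (integral_over D) f /\ phi = tofracp f.
Proof.
move=> [u [v [hu [hv [vn ephi]]]]] [pp [mpp [Spp rpp]]].
have Q0 : IntF K Omega (integral_over D) 0.
  split; first by move=> i; rewrite coef0; apply: (K0 Kf).
  by move=> a _; rewrite horner0; apply: (int_D HD); exact: (subring0 HD).
have [P0 [hP0 eP0]] := @lift_poly _ _ tofracp (IntF K Omega (integral_over D)) pp Q0 Spp.
have tinj : injective (tofracp : {poly L} -> {fraction {poly L}}).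
  by move=> x y /eqP; rewrite tofrac_eq => /eqP.
set N := (size pp).-1.
set g := gcdp u v; set u1 := u %/ g; set v1 := v %/ g.
have gn : g != 0 by rewrite gcdp_eq0 negb_and vn orbT.
have eu : u = u1 * g by rewrite divpK // dvdp_gcdl.
have ev : v = v1 * g by rewrite divpK // dvdp_gcdr.
have v1n : v1 != 0 by apply: contraNneq vn => e0; rewrite ev e0 mul0r.
have cop : coprimep u1 v1 by apply: coprimep_div_gcd; rewrite vn orbT.
have tgn : tofracp g != 0 by rewrite tofrac_eq0.
have ephi1 : phi = tofracp u1 / tofracp v1.
  by rewrite ephi eu ev !rmorphM invfM mulrACA mulfV // mulr1.
set Hm := \sum_(i < N.+1) P0`_i * u1 ^+ i * v1 ^+ (N - i).
have eHm : tofracp Hm = pp.[phi] * (tofracp v1) ^+ N.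
  rewrite ephi1 homog ?tofrac_eq0 //; last by rewrite /N leqSpred.
  rewrite rmorph_sum; apply: eq_bigr => i _.
  by rewrite !rmorphM !rmorphXn -eP0 coef_map.
have Hm0 : Hm = 0 by apply: tinj; rewrite eHm (rootP rpp) mul0r rmorph0.
have PN : P0`_N = 1.
  apply: tinj; rewrite rmorph1; transitivity (pp`_N); first by rewrite -eP0 coef_map.
  rewrite /N -lead_coefE; exact: (monicP mpp).
move: Hm0; rewrite /Hm big_ord_recr /= PN subnn expr0 mulr1 mul1r.
set W := \sum_(i < N) _.
have eW : W = v1 * \sum_(i < N) P0`_i * u1 ^+ i * v1 ^+ (N - i.+1).
  rewrite mulr_sumr; apply: eq_bigr => i _ /=.
  by rewrite -subnSK // exprS mulrCA.
move=> /eqP; rewrite addr_eq0 eW; set S := \sum_(i < N) _ => /eqP e.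
have euN : u1 ^+ N = v1 * - S by rewrite mulrN e opprK.
have dv : v1 %| u1 ^+ N by rewrite euN dvdp_mulIl.
have cop' : coprimep v1 (u1 ^+ N) by rewrite coprimep_sym coprimep_expl.
have dv1 : v1 %| 1 by rewrite -(Gauss_dvdpl 1 cop') mul1r.
have sv1 : (size v1 <= 1)%N by have := dvdp_leq (oner_neq0 _) dv1; rewrite size_poly1.
set c := v1`_0.
have ev1 : v1 = c%:P := size1_polyC sv1.
have cn : c != 0 by apply: contraNneq v1n => e0; rewrite ev1 e0.
set f := u1 * (c^-1)%:P.
have ef : phi = tofracp f.
  rewrite ephi1 rmorphM /= ev1; congr (_ * _).
  have h : tofracp c%:P * tofracp (c^-1)%:P = 1.
    by rewrite -rmorphM -polyCM mulfV // rmorph1.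
  have tcn : tofracp c%:P != 0 by rewrite tofrac_eq0 polyC_eq0.
  by apply: (mulfI tcn); rewrite mulfV.
have fv : f * v = u.
  apply: tinj; rewrite [tofracp (f * v)]rmorphM /= -ef ephi; by apply: mulfVK; rewrite tofrac_eq0.
have hf : poly_over F f := div_over Ff hu hv vn fv.
exists f; split => //; split => // a ha.
have P0f : P0.[f] = 0.
  apply: tinj; rewrite -horner_map /= eP0 -ef rmorph0; exact: (rootP rpp).
have mP0 : P0 \is monic.
  have hl := @lead_coef_map_inj _ _ _ tinj (rmorph0 tofracp) P0.
  apply/monicP; apply: tinj; rewrite rmorph1 -hl eP0.
  exact: (monicP mpp).
apply: (int_root_monic HD (p := map_poly (horner_eval a) P0)).
- exact: monic_map.
- by rewrite /root horner_map /= horner_evalE P0f horner0.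
- by move=> i; rewrite coef_map /=; apply: (hP0 i).2.
Qed.
End Forward.

Fixpoint polys (L : nzRingType) (rs : seq L) n : seq {poly L} :=
  if n is n'.+1 then [seq g * 'X + r%:P | g <- polys rs n', r <- rs] else [:: 0].

Lemma coef_tailp (L : nzRingType) (g : {poly L}) i : (tailp g)`_i = g`_i.+1.
Proof.
rewrite coef_poly; case: ltnP => // hi; rewrite nth_default //.
by move: hi; case: (size g).
Qed.

Lemma mem_polys (L : nzRingType) (rs : seq L) n (g : {poly L}) :
  (size g <= n)%N -> (forall i, (i < n)%N -> g`_i \in rs) -> g \in polys rs n.
Proof.
elim: n g => [|n IH] g hs hc /=.
  by rewrite inE; apply/eqP; apply/eqP; rewrite -size_poly_eq0 -leqn0.
rewrite [g]tailpE; apply: allpairs_f; last exact: hc.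
apply: IH => [|i hi]; last by rewrite coef_tailp; apply: hc.
apply: leq_trans (size_poly _ _) _; by move: hs; case: (size g).
Qed.

Section Back.
Variables (L : closedFieldType) (K : L -> Prop).
Hypothesis Kf : is_subfield K.
Hypothesis alg : algebraic_over K.

Lemma K_exp x n : K x -> K (x ^+ n).
Proof. move=> kx; elim: n => [|n IH]; first by rewrite expr0; apply: (K1 Kf). by rewrite exprS; apply: (KM Kf). Qed.

Lemma unif (s : seq L) : (forall z, z \in s -> exists q, [pchar L].-nat q /\ K (z ^+ q)) ->
  exists Q, [pchar L].-nat Q /\ forall z, z \in s -> K (z ^+ Q).
Proof.
elim: s => [|z s IH] h; first by exists 1%N; split.
have [Q [hQ hK]] : exists Q, [pchar L].-nat Q /\ forall z, z \in s -> K (z ^+ Q).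
  by apply: IH => w hw; apply: h; rewrite in_cons hw orbT.
have [q [hq hz]] := h z (mem_head _ _).
exists (Q * q)%N; split; first by rewrite pnatM hQ hq.
move=> w; rewrite in_cons => /orP [/eqP ->|hw].
  by rewrite mulnC exprM; apply: K_exp.
by rewrite exprM; apply: K_exp; apply: hK.
Qed.
End Back.

Section Backward.
Variables (L : closedFieldType) (D K F Omega : L -> Prop).
Hypotheses (HD : is_subring D) (Kf : is_subfield K) (DK : forall x, D x -> K x)
  (alg : algebraic_over K) (inv : GK_invariant K Omega).

Lemma int_sigma (sigma : {rmorphism L -> L}) x : in_GK K sigma ->
  integral_over D x -> integral_over D (sigma x).
Proof.
move=> [_ fixK] [p [mp [Dp rp]]]; exists p; split => //; split => //.
have e : map_poly sigma p = p by apply/polyP => i; rewrite coef_map /= fixK //; apply: DK.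
by rewrite /root -e horner_map (rootP rp) rmorph0.
Qed.

Lemma conj_int (sigma : {rmorphism L -> L}) (f : {poly L}) : in_GK K sigma ->
  (forall b, Omega b -> integral_over D f.[b]) ->
  forall a, Omega a -> integral_over D (map_poly sigma f).[a].
Proof.
move=> hs hf a ha.
have [tau [ht htc]] := GK_inv Kf alg hs.
have hb : Omega (tau a) by apply/(inv (tau a)); exists tau, a.
have -> : a = sigma (tau a) by rewrite (proj2 (htc a)).
by rewrite horner_map; apply: int_sigma => //; apply: hf.
Qed.

Lemma int_exp x n : integral_over D x -> integral_over D (x ^+ n).
Proof.
move=> hx; elim: n => [|n IH]; first by rewrite expr0; apply: (int_D HD); case: HD.
by rewrite exprS; apply: (int_mul HD).
Qed.

Lemma IntF0 : IntF K Omega (integral_over D) 0.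
Proof.
split; first by move=> i; rewrite coef0; apply: (K0 Kf).
by move=> a _; rewrite horner0; apply: (int_D HD); exact: (subring0 HD).
Qed.

Lemma back_main (f : {poly L}) : (forall b, Omega b -> integral_over D f.[b]) ->
  exists P2 : {poly {poly L}},
    [/\ P2 \is monic, (forall i, IntF K Omega (integral_over D) P2`_i) & root P2 f].
Proof.
move=> hf.
set n := size f.
have hh : forall i, exists h : {poly L}, h != 0 /\ poly_over K h /\ root h f`_i := fun i => alg f`_i.
pose h i := projT1 (cid (hh i)).
have hhP : forall i, h i != 0 /\ poly_over K (h i) /\ root (h i) f`_i := fun i => projT2 (cid (hh i)).
set H := \prod_(i < n) h i.
have Hn : H != 0 by rewrite prodf_seq_neq0; apply/allP => i _; exact: (hhP i).1.
have HK : poly_over K H.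
  apply/(poly_overP (proj1 Kf)); apply: rpred_prod => i _; apply/(poly_overP (proj1 Kf)).
  exact: (hhP i).2.1.
have [rs hrs] := closed_field_poly_normal H.
have rootH : forall w, root H w -> w \in rs.
  by move=> w; rewrite {1}hrs rootZ ?lead_coef_eq0 // root_prod_XsubC.
have conj_in : forall sigma : {rmorphism L -> L}, in_GK K sigma -> map_poly sigma f \in polys rs n.
  move=> sigma hs; apply: mem_polys; first by rewrite size_map_poly.
  move=> i hi; rewrite coef_map; apply: rootH.
  have eH : map_poly sigma H = H.
    by apply/polyP => j; rewrite coef_map /= (proj2 hs) //; apply: HK.
  rewrite /root -eH horner_map; apply/eqP.
  by rewrite horner_prod (bigD1 (Ordinal hi)) //= (rootP (hhP i).2.2) mul0r rmorph0.
set C := [seq g <- undup (polys rs n) |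
  `[< exists sigma : {rmorphism L -> L}, in_GK K sigma /\ g = map_poly sigma f >]].
have memC : forall g, g \in C <-> exists sigma : {rmorphism L -> L}, in_GK K sigma /\ g = map_poly sigma f.
  move=> g; rewrite mem_filter mem_undup; split.
    by move=> /andP [/asboolP hg _].
  move=> hg; apply/andP; split; first exact/asboolP.
  by case: hg => sigma [hs ->]; apply: conj_in.
have uC : uniq C by rewrite filter_uniq // undup_uniq.
have idK : in_GK K (idfun : {rmorphism L -> L}) by split => //; exists idfun.
have fC : f \in C by apply/memC; exists idfun; split => //; rewrite map_poly_id.
set P := \prod_(g <- C) ('X - g%:P).
have mP : P \is monic := monic_prod_XsubC _ _ _.
have rP : root P f by rewrite root_prod_XsubC.
have fixP : forall tau : {rmorphism L -> L}, in_GK K tau -> map_poly (map_poly tau) P = P.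
  move=> tau ht.
  have e1 : map_poly (map_poly tau) P = \prod_(g <- map (map_poly tau) C) ('X - g%:P).
    rewrite rmorph_prod big_map; apply: eq_bigr => g _.
    by rewrite rmorphB /= map_polyX map_polyC.
  rewrite e1; apply: perm_big.
  have inj : injective (map_poly tau) := map_poly_inj tau.
  have um : uniq (map (map_poly tau) C) by rewrite map_inj_uniq.
  have sub : {subset map (map_poly tau) C <= C}.
    move=> g /mapP [g' /memC [sigma [hs ->]] ->]; apply/memC.
    exists (tau \o sigma : {rmorphism L -> L}); split; last by rewrite map_poly_comp.
    split; first by apply: bij_comp; [case: ht | case: hs].
    by move=> k kK /=; rewrite (proj2 hs) // (proj2 ht).
  have [_ eqm] := uniq_min_size um sub (eq_leq (esym (size_map _ _))).
  exact: uniq_perm.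
have intP : forall i a, Omega a -> integral_over D (P`_i).[a].
  move=> i a ha.
  have HI := int_subring HD.
  have : map_poly (horner_eval a) P \is a polyOver (sp HI).
    rewrite rmorph_prod big_seq; apply: rpred_prod => g /memC [sigma [hs ->]].
    rewrite rmorphB /= map_polyX map_polyC /=; apply: rpredB; first exact: polyOverX.
    rewrite polyOverC; apply/spP; rewrite horner_evalE; exact: conj_int.
  by move/polyOverP/(_ i); rewrite coef_map /= => /spP.
have fixc : forall i j (tau : {rmorphism L -> L}), in_GK K tau -> tau (P`_i)`_j = (P`_i)`_j.
  move=> i j tau ht; have := congr1 (fun Q : {poly {poly L}} => (Q`_i)`_j) (fixP tau ht).
  by rewrite /= !coef_map.
set s := [seq (P`_i)`_j | i <- iota 0 (size P), j <- iota 0 (size P`_i)].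
have [Q [hQ hQK]] : exists Q, [pchar L].-nat Q /\ forall z, z \in s -> K (z ^+ Q).
  apply: (unif Kf alg) => z /allpairsPdep [i [j [hi hj ->]]].
  by apply: (fixed_pinsep Kf alg) => tau ht; exact: fixc.
have Q0 : (0 < Q)%N := pnat_gt0' hQ.
have cK : forall i j, K ((P`_i)`_j ^+ Q).
  move=> i j; case: (ltnP i (size P)) => hi.
    case: (ltnP j (size P`_i)) => hj.
      apply: hQK; apply/allpairsPdep; exists i, j; split => //; by rewrite mem_iota.
    by rewrite (nth_default _ hj) expr0n gtn_eqF //; apply: (K0 Kf).
  by rewrite (nth_default _ hi) coef0 expr0n gtn_eqF //; apply: (K0 Kf).
exists (P ^+ Q); split.
- exact: monic_exp.
- move=> k; have hQp : [pchar {poly L}].-nat Q by rewrite (eq_pnat _ (@pchar_poly L)).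
  rewrite coef_expq //; case: ifP => _; last exact: IntF0.
  split.
    move=> j; rewrite coef_expq //; case: ifP => _; [exact: cK | exact: (K0 Kf)].
  by move=> a ha; rewrite horner_exp; apply: int_exp; apply: intP.
- by rewrite /root horner_exp (rootP rP) expr0n gtn_eqF.
Qed.
End Backward.

Theorem mainTheorem9 (L : closedFieldType) (D K F Omega : L -> Prop) :
  is_subring D -> is_subfield K -> is_quotient_field D K ->
  integrally_closed_in D K ->
  algebraic_over K ->
  (forall a, Omega a -> integral_over D a) ->
  GK_invariant K Omega ->
  is_subfield F -> (forall x, K x -> F x) -> (forall a, Omega a -> F a) ->
  forall phi : {fraction {poly L}},
    (in_ratfun_field F phi /\
     integral_over (fun psi => exists g, IntF K Omega (integral_over D) g /\ psi = tofracp g) phi)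
    <-> exists f, IntF F Omega (integral_over D) f /\ phi = tofracp f.
Proof.
move=> HD Kf qf icl alg Oint inv Ff KF OF phi; split.
  by move=> [hr hi]; exact: (forward HD Kf Ff hr hi).
move=> [f [[hfF hfO] ->]]; split.
  exists f, 1; split => //; split.
    by move=> i; rewrite coef1; case: (i == 0)%N; [apply: (K1 Ff) | apply: (K0 Ff)].
  by split; [exact: oner_neq0 | rewrite rmorph1 divr1].
have DK : forall x, D x -> K x := proj1 qf.
have [P2 [mP2 hP2 rP2]] := @back_main L D K F Omega HD Kf DK alg inv f hfO.
exists (map_poly tofracp P2); split; first exact: monic_map.
split; first by move=> i; exists P2`_i; split => //; rewrite coef_map.
by rewrite /root horner_map (rootP rP2) rmorph0.
Qed.
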